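(* Let $0<q<1$ and let $x,y$ be real numbers with $|x|<1$ and $|y|<1$. Then \[ \sum_{m=0}^\infty\sum_{n=0}^\infty (-1)^{m+n}[x]_q^{m+1}[y]_q^{n+1}\,\zeta[m+2,\{1\}^n] = 1-\frac{\Gamma_q(1+x)\,\Gamma_q(1+y)}{\Gamma_q(1+x+y)}. \]
   Context: Fix $0<q<1$ and for real $x$ put $[x]_q := (1-q^x)/(1-q)$. For positive integers $s_1,\dots,s_N$ with $s_1>1$, $\zeta[s_1,\dots,s_N] := \sum_{k_1>\cdots>k_N>0}\prod_{j=1}^N q^{(s_j-1)k_j}/[k_j]_q^{s_j}$ (sum over positive integers); $\{1\}^n$ denotes $n$ consecutive copies of $1$. For real $a,b$ put $(a+b)_q^\infty := \prod_{k=0}^\infty(a+bq^k)$. The $q$-gamma function is $\Gamma_q(x) := \dfrac{(1-q)_q^\infty\,(1-q)^{1-x}}{(1-q^x)_q^\infty}$, i.e. $\Gamma_q(x)=(1-q)^{1-x}\prod_{k\ge0}\frac{1-q^{k+1}}{1-q^{k+x}}$. *)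

(* Defs.v *)
From Stdlib Require Import Reals List.
From Coquelicot Require Import Coquelicot.
Open Scope R_scope.

Definition qnum (q x : R) : R := (1 - Rpower q x) / (1 - q).

Definition mzv_term (q : R) (s k : nat) : R :=
  q ^ ((s - 1) * k) / (qnum q (INR k)) ^ s.

(* Truncated nested sum: H q ss k = sum over k > k_1 > ... > k_N > 0
   of prod_j mzv_term q s_j k_j, where ss = [s_1; ...; s_N].  H q [] k = 1. *)
Fixpoint mzv_trunc (q : R) (ss : list nat) (k : nat) : R :=
  match ss with
  | nil => 1
  | s :: rest =>
      sum_n_m (fun j => mzv_term q s j * mzv_trunc q rest j) 1 (k - 1)
  end.
(* note: sum_n_m f 1 0 = 0 (empty range), so k = 0 or 1 gives 0 *)

(* zeta[s_1,...,s_N] = sum_{k_1 > ... > k_N > 0} prod_j q^{(s_j-1)k_j}/[k_j]_q^{s_j}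
   (outer sum over k_1 >= 1, as a Coquelicot series). *)
Definition qzeta (q : R) (ss : list nat) : R :=
  match ss with
  | nil => 1
  | s :: rest => Series (fun n => mzv_term q s (S n) * mzv_trunc q rest (S n))
  end.

Fixpoint prod_lt (f : nat -> R) (N : nat) : R :=
  match N with
  | O => 1
  | S N' => prod_lt f N' * f N'
  end.

Definition qpoch_inf (q a b : R) : R :=
  real (Lim_seq (fun N => prod_lt (fun k => a + b * q ^ k) N)).

Definition qGamma (q x : R) : R :=
  qpoch_inf q 1 (- q) * Rpower (1 - q) (1 - x) / qpoch_inf q 1 (- Rpower q x).

(* Main.v *)
Require Import Defs.
From Stdlib Require Import Reals List Lra Lia Psatz.
From Coquelicot Require Import Coquelicot.
Open Scope R_scope.

Lemma series_lim (a : nat -> R) (l : R) : is_series a l <-> is_lim_seq (sum_n a) l.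
Proof. split; intro H; exact H. Qed.

Lemma sum_n_R_Sn (a : nat -> R) n : sum_n a (S n) = sum_n a n + a (S n).
Proof. rewrite sum_Sn. reflexivity. Qed.

Lemma lim_Kgeom (K rho : R) : 0 <= rho < 1 -> is_lim_seq (fun N => K * rho ^ N) 0.
Proof.
  intro Hr.
  assert (H := is_lim_seq_scal_l (fun N => rho ^ N) K 0 (is_lim_seq_geom rho ltac:(rewrite Rabs_pos_eq; lra))).
  simpl in H. rewrite Rmult_0_r in H. exact H.
Qed.

Lemma lim_geom_err (s : nat -> R) (l K rho : R) :
  0 <= rho < 1 -> (forall N, Rabs (s N - l) <= K * rho ^ N) -> is_lim_seq s l.
Proof.
  intros Hr H.
  apply is_lim_seq_le_le with (u := fun N => l - K * rho ^ N) (w := fun N => l + K * rho ^ N).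
  - intro N. specialize (H N). apply Rabs_le_between in H. lra.
  - assert (H1 := is_lim_seq_minus _ _ l 0 l (is_lim_seq_const l) (lim_Kgeom K rho Hr)).
    apply H1. unfold is_Rbar_minus, is_Rbar_plus; simpl. f_equal; f_equal; ring.
  - assert (H1 := is_lim_seq_plus _ _ l 0 l (is_lim_seq_const l) (lim_Kgeom K rho Hr)).
    apply H1. unfold is_Rbar_plus; simpl. f_equal; f_equal; ring.
Qed.

Lemma pow_le1 x n : 0 <= x <= 1 -> x ^ n <= 1.
Proof. intro H; induction n; simpl. lra. assert (0 <= x ^ n) by (apply pow_le; lra). nra. Qed.

Lemma ex_series_cmp (a b : nat -> R) : ex_series b -> (forall k, Rabs (a k) <= b k) -> ex_series a.
Proof.
  intros Hb H. apply (@ex_series_le R_AbsRing R_CompleteNormedModule) with (b := b); auto.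
Qed.

Lemma ex_series_cmp_abs (a b : nat -> R) : ex_series b -> (forall k, Rabs (a k) <= b k) ->
  ex_series (fun k => Rabs (a k)).
Proof.
  intros Hb H. apply ex_series_cmp with b; auto. intro k; rewrite Rabs_Rabsolu; auto.
Qed.

Lemma series_abs_bound (a b : nat -> R) : ex_series b -> (forall k, Rabs (a k) <= b k) ->
  Rabs (Series a) <= Series b.
Proof.
  intros Hb H. eapply Rle_trans. apply Series_Rabs. apply ex_series_cmp_abs with b; auto.
  apply Series_le; auto. intro k; split; auto. apply Rabs_pos.
Qed.

Lemma lim0_dom (c V : nat -> R) (K : R) : ex_series (fun k => Rabs (c k)) ->
  (forall k, Rabs (V k) <= K * Rabs (c k)) -> is_lim_seq V 0.
Proof.
  intros Hc H. apply ex_series_lim_0 in Hc.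
  apply is_lim_seq_le_le with (u := fun k => - (K * Rabs (c k))) (w := fun k => K * Rabs (c k)).
  - intro k. specialize (H k). apply Rabs_le_between in H. lra.
  - assert (H1 := is_lim_seq_scal_l _ K 0 Hc). simpl in H1. rewrite Rmult_0_r in H1.
    apply is_lim_seq_opp in H1. simpl in H1. rewrite Ropp_0 in H1. exact H1.
  - assert (H1 := is_lim_seq_scal_l _ K 0 Hc). simpl in H1. rewrite Rmult_0_r in H1. exact H1.
Qed.

Lemma lim_unique_R (u : nat -> R) (a b : R) : is_lim_seq u a -> is_lim_seq u b -> a = b.
Proof.
  intros Ha Hb. apply is_lim_seq_unique in Ha. apply is_lim_seq_unique in Hb.
  rewrite Ha in Hb. injection Hb; auto.
Qed.

Lemma sum_n_Rplus (u v : nat -> R) N : sum_n (fun k => u k + v k) N = sum_n u N + sum_n v N.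
Proof. induction N. rewrite !sum_O; auto. rewrite !sum_n_R_Sn, IHN. lra. Qed.

Lemma sum_n_Rscal (c : R) (u : nat -> R) N : sum_n (fun k => c * u k) N = c * sum_n u N.
Proof. induction N. rewrite !sum_O; auto. rewrite !sum_n_R_Sn, IHN. rewrite Rmult_plus_distr_l; reflexivity. Qed.

Lemma sum_n_ext' (u v : nat -> R) N : (forall k, u k = v k) -> sum_n u N = sum_n v N.
Proof. intro H. induction N. rewrite !sum_O; auto. rewrite !sum_n_R_Sn, IHN, H. auto. Qed.

Lemma sum_n_shift (u : nat -> R) N : sum_n u (S N) = u O + sum_n (fun k => u (S k)) N.
Proof. induction N. rewrite sum_n_R_Sn, !sum_O. auto. rewrite sum_n_R_Sn, IHN, (sum_n_R_Sn _ N). lra. Qed.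

Lemma sum_n_nonneg (u : nat -> R) N : (forall k, 0 <= u k) -> 0 <= sum_n u N.
Proof. intro H. induction N. rewrite sum_O; auto. rewrite sum_n_R_Sn. specialize (H (S N)). lra. Qed.

Lemma sum_n_term_le (u : nat -> R) N n : (forall k, 0 <= u k) -> (n <= N)%nat -> u n <= sum_n u N.
Proof.
  intros H Hn. induction N. assert (n = O) by lia. subst. rewrite sum_O; lra.
  rewrite sum_n_R_Sn. destruct (Nat.eq_dec n (S N)). subst.
  assert (0 <= sum_n u N) by (apply sum_n_nonneg; auto). lra.
  assert (u n <= sum_n u N) by (apply IHN; lia). specialize (H (S N)). lra.
Qed.

Lemma Series_sum_n (f : nat -> nat -> R) N : (forall n, ex_series (f n)) ->
  sum_n (fun n => Series (f n)) N = Series (fun i => sum_n (fun n => f n i) N).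
Proof.
  intro H. induction N.
  - rewrite sum_O. apply Series_ext. intro; rewrite sum_O; auto.
  - rewrite sum_n_R_Sn, IHN. rewrite <- Series_plus. apply Series_ext. intro; rewrite sum_n_R_Sn; auto.
    2: apply H.
    clear IHN. induction N.
    + apply ex_series_ext with (f O). intro; rewrite sum_O; auto. apply H.
    + apply ex_series_ext with (fun i => sum_n (fun n => f n i) N + f (S N) i).
      intro; rewrite sum_n_R_Sn; auto.
      apply (ex_series_plus (fun i => sum_n (fun n => f n i) N) (f (S N))); auto.
Qed.

Lemma ex_series_ext_R (a b : nat -> R) : (forall n, a n = b n) -> ex_series a -> ex_series b.
Proof. intros H Ha. apply ex_series_ext with a; auto. Qed.

Lemma prod_lt_ext f g N : (forall k, (k < N)%nat -> f k = g k) -> prod_lt f N = prod_lt g N.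
Proof. induction N; intros H; simpl; auto. rewrite IHN by (intros; apply H; lia). rewrite H by lia. auto. Qed.

Lemma prod_lt_mul f g N : prod_lt (fun k => f k * g k) N = prod_lt f N * prod_lt g N.
Proof. induction N; simpl. ring. rewrite IHN. ring. Qed.

Lemma prod_lt_inv f N : prod_lt (fun k => / f k) N = / prod_lt f N.
Proof. induction N; simpl. rewrite Rinv_1; auto. rewrite IHN, Rinv_mult. auto. Qed.

Lemma prod_lt_div f g N : prod_lt (fun k => f k / g k) N = prod_lt f N / prod_lt g N.
Proof. unfold Rdiv. rewrite prod_lt_mul, prod_lt_inv. auto. Qed.

Lemma prod_lt_pos f N : (forall k, 0 < f k) -> 0 < prod_lt f N.
Proof. intro H; induction N; simpl. lra. apply Rmult_lt_0_compat; auto. Qed.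

Lemma prod_lt_nonneg f N : (forall k, 0 <= f k) -> 0 <= prod_lt f N.
Proof. intro H; induction N; simpl. lra. apply Rmult_le_pos; auto. Qed.

Lemma prod_lt_abs f N : Rabs (prod_lt f N) = prod_lt (fun k => Rabs (f k)) N.
Proof. induction N; simpl. apply Rabs_R1. rewrite Rabs_mult, IHN. auto. Qed.

Lemma prod_lt_le f g N : (forall k, 0 <= f k <= g k) -> prod_lt f N <= prod_lt g N.
Proof.
  intro H; induction N; simpl. lra.
  apply Rmult_le_compat; auto. apply prod_lt_nonneg. intro k; apply H. apply H. apply H.
Qed.

Lemma telescope_series (a V : nat -> R) :
  (forall k, a k = V k - V (S k)) -> V O = 0 -> is_lim_seq V 0 -> is_series a 0.
Proof.
  intros Ha H0 HV. apply series_lim.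
  assert (E : forall N, sum_n a N = - V (S N)).
  { induction N. rewrite sum_O, Ha, H0; lra. rewrite sum_n_R_Sn, IHN, Ha; lra. }
  apply is_lim_seq_ext with (u := fun N => - V (S N)). intro; rewrite E; auto.
  apply is_lim_seq_incr_1 in HV. apply is_lim_seq_opp in HV. simpl in HV.
  rewrite Ropp_0 in HV. exact HV.
Qed.

Lemma ex_series_ratio (e : nat -> R) (rho : R) :
  0 <= rho < 1 -> (forall i, 0 <= e i) -> (forall i, e (S i) <= rho * e i) -> ex_series e.
Proof.
  intros Hr H0 H.
  assert (B : forall i, e i <= e O * rho ^ i).
  { induction i. simpl. lra. simpl. specialize (H i). nra. }
  apply (@ex_series_le R_AbsRing R_CompleteNormedModule) with (b := fun i => e O * rho ^ i).
  - intro n. unfold norm; simpl. unfold abs; simpl. rewrite Rabs_pos_eq by auto. auto.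
  - apply (ex_series_scal_l (e O) (fun i => rho ^ i)). apply ex_series_geom.
    rewrite Rabs_pos_eq; lra.
Qed.

Section Prod.
Variable q : R.
Hypothesis hq0 : 0 < q.
Hypothesis hq1 : q < 1.

Lemma geom_step N : (1 - q ^ N) / (1 - q) + q ^ N = (1 - q ^ S N) / (1 - q).
Proof. simpl. field. lra. Qed.

Lemma prod_upper (d : R) N : 0 <= d ->
  prod_lt (fun k => 1 + d * q ^ k) N <= exp (d * ((1 - q ^ N) / (1 - q))).
Proof.
  intro Hd. induction N; cbn [prod_lt].
  - rewrite pow_O. replace (d * ((1 - 1) / (1 - q))) with 0 by (field; lra). rewrite exp_0. lra.
  - rewrite <- geom_step, (Rmult_plus_distr_l _ ((1 - q ^ N) / (1 - q))), exp_plus.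
    apply Rmult_le_compat; auto.
    + apply prod_lt_nonneg. intro k. assert (0 <= q ^ k) by (apply pow_le; lra). nra.
    + assert (0 <= q ^ N) by (apply pow_le; lra). nra.
    + apply exp_ineq1_le.
Qed.

Lemma geom_le1 N : (1 - q ^ N) / (1 - q) <= / (1 - q).
Proof.
  assert (0 <= q ^ N) by (apply pow_le; lra).
  unfold Rdiv. rewrite <- (Rmult_1_l (/ (1 - q))) at 2. apply Rmult_le_compat_r. left; apply Rinv_0_lt_compat; lra. lra.
Qed.

Lemma exp_le' a b : a <= b -> exp a <= exp b.
Proof. intros [H|H]. left; apply exp_increasing; auto. subst; lra. Qed.

Lemma prod_bound (c : R) N :
  Rabs (prod_lt (fun k => 1 + c * q ^ k) N) <= exp (Rabs c / (1 - q)).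
Proof.
  rewrite prod_lt_abs.
  apply Rle_trans with (prod_lt (fun k => 1 + Rabs c * q ^ k) N).
  - apply prod_lt_le. intro k. split. apply Rabs_pos.
    assert (0 < q ^ k) by (apply pow_lt; lra).
    eapply Rle_trans. apply Rabs_triang. rewrite Rabs_R1, Rabs_mult, (Rabs_pos_eq (q^k)) by lra. lra.
  - eapply Rle_trans. apply prod_upper. apply Rabs_pos.
    apply exp_le'. unfold Rdiv. apply Rmult_le_compat_l. apply Rabs_pos.
    apply geom_le1.
Qed.

Lemma prod_conv (c : R) : ex_finite_lim_seq (fun N => prod_lt (fun k => 1 + c * q ^ k) N).
Proof.
  set (P := fun N => prod_lt (fun k => 1 + c * q ^ k) N).
  set (M := exp (Rabs c / (1 - q))).
  assert (Hd : ex_series (fun N => P (S N) - P N)).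
  { apply ex_series_Rabs.
    apply (@ex_series_le R_AbsRing R_CompleteNormedModule) with (b := fun N => (M * Rabs c) * q ^ N).
    - intro n. unfold norm; simpl. unfold abs; simpl. rewrite Rabs_Rabsolu.
      unfold P; simpl. replace (prod_lt (fun k : nat => 1 + c * q ^ k) n * (1 + c * q ^ n) -
        prod_lt (fun k : nat => 1 + c * q ^ k) n) with (prod_lt (fun k : nat => 1 + c * q ^ k) n * c * q ^ n) by ring.
      rewrite !Rabs_mult, (Rabs_pos_eq (q^n)) by (apply pow_le; lra).
      apply Rmult_le_compat_r. apply pow_le; lra. apply Rmult_le_compat_r. apply Rabs_pos.
      apply prod_bound.
    - apply (ex_series_scal_l (M * Rabs c) (fun i => q ^ i)). apply ex_series_geom.
      rewrite Rabs_pos_eq; lra. }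
  destruct Hd as [l Hl]. exists (l + P O).
  apply series_lim in Hl.
  apply is_lim_seq_incr_1.
  apply is_lim_seq_ext with (u := fun N => sum_n (fun N => P (S N) - P N) N + P O).
  { intro N. induction N. rewrite sum_O. ring. rewrite sum_n_R_Sn. lra. }
  apply is_lim_seq_plus'; auto. apply is_lim_seq_const.
Qed.

Lemma qpoch_lim (c : R) : is_lim_seq (fun N => prod_lt (fun k => 1 + c * q ^ k) N) (qpoch_inf q 1 c).
Proof.
  destruct (prod_conv c) as [l Hl]. unfold qpoch_inf.
  rewrite (is_lim_seq_unique _ _ Hl). simpl. exact Hl.
Qed.

Lemma prod_lower (d : R) N : 0 <= d < 1 ->
  exp (- (d / (1 - d)) * ((1 - q ^ N) / (1 - q))) <= prod_lt (fun k => 1 + - d * q ^ k) N.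
Proof.
  intro Hd. induction N; cbn [prod_lt].
  - rewrite pow_O. replace (- (d / (1 - d)) * ((1 - 1) / (1 - q))) with 0 by (field; lra). rewrite exp_0. lra.
  - rewrite <- geom_step, (Rmult_plus_distr_l _ ((1 - q ^ N) / (1 - q))), exp_plus.
    assert (Hq : 0 < q ^ N <= 1). { split. apply pow_lt; lra. apply pow_le1; lra. }
    apply Rmult_le_compat; auto.
    + left; apply exp_pos.
    + left; apply exp_pos.
    + set (s := d * q ^ N).
      assert (Hs : 0 <= s <= d) by (unfold s; nra).
      apply Rle_trans with (exp (- (s / (1 - s)))).
      * apply exp_le'. replace (- (d / (1 - d)) * q ^ N) with (- (s / (1 - d))) by (unfold s; field; lra).
        apply Ropp_le_contravar.
        apply Rmult_le_compat_l. lra. apply Rinv_le_contravar; lra.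
      * assert (1 + s / (1 - s) <= exp (s / (1 - s))) by apply exp_ineq1_le.
        assert (E : exp (- (s / (1 - s))) * exp (s / (1 - s)) = 1).
        { rewrite <- exp_plus. replace (- (s / (1 - s)) + s / (1 - s)) with 0 by ring. apply exp_0. }
        assert (1 + s / (1 - s) = / (1 - s)) by (field; lra).
        assert (0 < exp (- (s / (1 - s)))) by apply exp_pos.
        replace (1 + - d * q ^ N) with (1 - s) by (unfold s; ring).
        assert (exp (- (s / (1 - s))) * / (1 - s) <= 1) by nra.
        apply Rmult_le_reg_r with (/ (1 - s)). apply Rinv_0_lt_compat; lra.
        rewrite Rinv_r by lra. lra.
Qed.

Lemma qpoch_pos (d : R) : 0 <= d < 1 -> 0 < qpoch_inf q 1 (- d).
Proof.
  intro Hd.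
  assert (H := qpoch_lim (- d)).
  set (L := exp (- (d / (1 - d)) * (/ (1 - q)))).
  assert (HL : 0 < L) by apply exp_pos.
  apply Rlt_le_trans with L; auto.
  assert (Hle := is_lim_seq_le (fun _ => L) (fun N => prod_lt (fun k : nat => 1 + - d * q ^ k) N) L (qpoch_inf q 1 (- d))).
  simpl in Hle. apply Hle; auto. 2: apply is_lim_seq_const.
  intro N. eapply Rle_trans. 2: apply prod_lower; auto.
  apply exp_le'. assert (0 <= d / (1 - d)) by (apply Rdiv_le_0_compat; lra).
  assert (H1 := geom_le1 N). nra.
Qed.

End Prod.

Section Gauss.
Variables q z X : R.
Hypothesis hq0 : 0 < q.
Hypothesis hq1 : q < 1.
Hypothesis hz0 : 0 < z.
Hypothesis hz1 : z < 1.
Hypothesis hX0 : 0 < X.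
Hypothesis hX1 : q * X < 1.

Definition cc (k : nat) : R := prod_lt (fun i => (z - q ^ S i) / (1 - q ^ S i)) k.

Hypothesis Hc : ex_series (fun k => Rabs (cc k)).

Lemma q_pow_lt1 k : q ^ S k < 1.
Proof. assert (H := pow_lt_1_compat q (S k) ltac:(lra) ltac:(lia)). lra. Qed.

Lemma q_pow_pos k : 0 < q ^ k.
Proof. apply pow_lt; lra. Qed.

Lemma q_pow_le1 k : q ^ k <= 1.
Proof. apply pow_le1; lra. Qed.

Lemma cc_S k : cc (S k) * (1 - q ^ S k) = cc k * (z - q ^ S k).
Proof. unfold cc; cbn [prod_lt]. assert (H := q_pow_lt1 k). field. lra. Qed.

Definition GG (s : R) : R := Series (fun k => cc k * s ^ k).

Lemma GG_ex s : 0 <= s <= 1 -> ex_series (fun k => cc k * s ^ k).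
Proof.
  intro Hs. apply ex_series_cmp with (fun k => Rabs (cc k)); auto.
  intro k. rewrite Rabs_mult. rewrite (Rabs_pos_eq (s^k)) by (apply pow_le; lra).
  assert (s ^ k <= 1) by (apply pow_le1; lra). assert (0 <= Rabs (cc k)) by apply Rabs_pos. nra.
Qed.

Lemma GG_fun s : 0 <= s <= 1 -> (1 - z * s) * GG s = (1 - q * s) * GG (q * s).
Proof.
  intro Hs. assert (Hqs : 0 <= q * s <= 1) by nra.
  set (V := fun k => cc k * s ^ k * (1 - q ^ k)).
  assert (T : is_series (fun k => (1 - z * s) * (cc k * s ^ k) - (1 - q * s) * (cc k * (q * s) ^ k)) 0).
  { apply telescope_series with V.
    - intro k. unfold V. rewrite Rpow_mult_distr.
      assert (E := cc_S k). simpl pow in *. 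
      replace (cc (S k) * (s * s ^ k) * (1 - q * q ^ k)) with (s * s ^ k * (cc (S k) * (1 - q * q ^ k))) by ring.
      rewrite E. ring.
    - unfold V. simpl. ring.
    - apply lim0_dom with cc 1; auto. intro k. unfold V. rewrite !Rabs_mult, Rmult_1_l.
      rewrite (Rabs_pos_eq (s^k)) by (apply pow_le; lra).
      assert (H1 := q_pow_pos k). assert (H2 := q_pow_le1 k).
      rewrite (Rabs_pos_eq (1 - q^k)) by lra.
      assert (s ^ k <= 1) by (apply pow_le1; lra). assert (0 <= s ^ k) by (apply pow_le; lra).
      assert (0 <= Rabs (cc k)) by apply Rabs_pos.
      assert (0 <= s ^ k * (1 - q^k) <= 1) by nra. nra. }
  apply is_series_unique in T.
  rewrite Series_minus, !Series_scal_l in T. unfold GG. lra.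
  - apply (ex_series_scal_l (1 - z * s) (fun k => cc k * s ^ k)). apply GG_ex; auto.
  - apply (ex_series_scal_l (1 - q * s) (fun k => cc k * (q * s) ^ k)). apply GG_ex; auto.
Qed.


Lemma GG_near0 s : 0 <= s <= 1 -> Rabs (GG s - 1) <= s * Series (fun k => Rabs (cc k)).
Proof.
  intro Hs.
  assert (E0 : is_series (fun k => cc k * 0 ^ k) 1).
  { apply series_lim. apply is_lim_seq_ext with (u := fun _ => 1). 2: apply is_lim_seq_const.
    intro N. induction N. rewrite sum_O. unfold cc; simpl. ring.
    rewrite sum_n_R_Sn, <- IHN. simpl. ring. }
  assert (E1 : GG s - 1 = Series (fun k => cc k * s ^ k - cc k * 0 ^ k)).
  { rewrite Series_minus. rewrite (is_series_unique _ _ E0). unfold GG; auto.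
    apply GG_ex; auto. exists 1; auto. }
  rewrite E1. rewrite <- Series_scal_l.
  apply series_abs_bound. apply (ex_series_scal_l s (fun k => Rabs (cc k))); auto.
  intro k. destruct k. simpl. rewrite Rminus_diag, Rabs_R0. assert (0 <= Rabs (cc 0)) by apply Rabs_pos. nra.
  replace (cc (S k) * s ^ S k - cc (S k) * 0 ^ S k) with (cc (S k) * s ^ S k) by (simpl; ring).
  rewrite Rabs_mult, (Rabs_pos_eq (s ^ S k)) by (apply pow_le; lra).
  assert (s ^ S k <= s). { simpl. assert (s ^ k <= 1) by (apply pow_le1; lra). nra. }
  assert (0 <= Rabs (cc (S k))) by apply Rabs_pos. nra.
Qed.

Lemma GG_iter N : prod_lt (fun i => 1 + (- z) * q ^ i) N * GG 1 = prod_lt (fun i => 1 + (- q) * q ^ i) N * GG (q ^ N).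
Proof.
  induction N. simpl. ring.
  cbn [prod_lt].
  assert (H := GG_fun (q ^ N) ltac:(split; [left; apply q_pow_pos | apply q_pow_le1])).
  replace (q ^ S N) with (q * q ^ N) by (simpl; ring).
  transitivity ((1 + - z * q ^ N) * (prod_lt (fun i : nat => 1 + - z * q ^ i) N * GG 1)). ring.
  rewrite IHN.
  transitivity (prod_lt (fun i : nat => 1 + - q * q ^ i) N * ((1 - z * q ^ N) * GG (q ^ N))). ring.
  rewrite H. ring.
Qed.

Lemma GG1_value : GG 1 = qpoch_inf q 1 (- q) / qpoch_inf q 1 (- z).
Proof.
  assert (Hz : 0 < qpoch_inf q 1 (- z)) by (apply qpoch_pos; lra).
  assert (L1 := is_lim_seq_scal_r _ (GG 1) _ (qpoch_lim q hq0 hq1 (- z))).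
  assert (L2 : is_lim_seq (fun N => GG (q ^ N)) 1).
  { apply lim_geom_err with (K := Series (fun k => Rabs (cc k))) (rho := q). lra.
    intro N. rewrite Rmult_comm. apply GG_near0. split; [left; apply q_pow_pos | apply q_pow_le1]. }
  assert (L3 := is_lim_seq_mult' _ _ _ _ (qpoch_lim q hq0 hq1 (- q)) L2).
  simpl in L1.
  assert (E := lim_unique_R _ _ _ L1 (is_lim_seq_ext _ _ _ (fun N => eq_sym (GG_iter N)) L3)).
  apply Rmult_eq_reg_r with (qpoch_inf q 1 (- z)). 2: lra.
  unfold Rdiv. rewrite Rmult_assoc, Rinv_l by lra. lra.
Qed.


Definition hh (b : R) (k : nat) : R :=
  match k with O => 1 | _ => (1 - b) / (1 - b * q ^ k) end.

Definition FF (b : R) : R := Series (fun k => cc k * hh b k).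

Lemma den_pos b k : 0 <= b <= X -> 1 - q * X <= 1 - b * q ^ S k.
Proof.
  intro Hb. assert (q ^ S k <= q). { simpl. assert (H0 := q_pow_le1 k). nra. }
  assert (0 < q ^ S k) by apply q_pow_pos. nra.
Qed.

Lemma hh_bound b k : 0 <= b <= X -> Rabs (hh b k) <= 1 + (1 + X) / (1 - q * X).
Proof.
  intro Hb. assert (0 <= (1 + X) / (1 - q * X)) by (apply Rdiv_le_0_compat; lra).
  destruct k. simpl. rewrite Rabs_R1. lra.
  unfold hh. assert (Hd := den_pos b k Hb).
  unfold Rdiv. rewrite Rabs_mult, Rabs_inv, (Rabs_pos_eq (1 - b * q ^ S k)) by lra.
  assert (Rabs (1 - b) <= 1 + X) by (apply Rabs_le; lra).
  assert (/ (1 - b * q ^ S k) <= / (1 - q * X)) by (apply Rinv_le_contravar; lra).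
  assert (0 < / (1 - b * q ^ S k)) by (apply Rinv_0_lt_compat; lra).
  assert (Rabs (1 - b) * / (1 - b * q ^ S k) <= (1 + X) * / (1 - q * X)).
  { apply Rmult_le_compat; auto. apply Rabs_pos. lra. }
  lra.
Qed.

Lemma FF_ex b : 0 <= b <= X -> ex_series (fun k => cc k * hh b k).
Proof.
  intro Hb. apply ex_series_cmp with (fun k => (1 + (1 + X) / (1 - q * X)) * Rabs (cc k)).
  apply (ex_series_scal_l _ (fun k => Rabs (cc k))); auto.
  intro k. rewrite Rabs_mult, Rmult_comm. apply Rmult_le_compat_r. apply Rabs_pos. apply hh_bound; auto.
Qed.

Lemma FF_fun b : 0 <= b <= X -> (1 - q * b) * FF b = (1 - z * b) * FF (q * b).
Proof.
  intro Hb. assert (Hqb : 0 <= q * b <= X) by nra.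
  set (V := fun k => (1 - q * b) * (- b * cc k * (1 - q ^ k) / (1 - b * q ^ k))).
  assert (T : is_series (fun k => (1 - q * b) * (cc k * hh b k) - (1 - z * b) * (cc k * hh (q * b) k)) 0).
  { apply telescope_series with V.
    - intro k. destruct k.
      + unfold V, hh, cc; simpl. rewrite Rminus_diag. unfold Rdiv at 1. rewrite Rmult_0_r, Rmult_0_l, Rmult_0_r. field. split; nra.
      + assert (E := cc_S (S k)).
        assert (D1 := den_pos b k Hb). assert (D2 := den_pos b (S k) Hb).
        assert (D3 := q_pow_lt1 k). assert (D4 := q_pow_lt1 (S k)).
        unfold V, hh.
        replace (q ^ S (S k)) with (q * q ^ S k) in * by (simpl; ring).
        set (p := q ^ S k) in *.
        replace (- b * cc (S (S k)) * (1 - q * p) / (1 - b * (q * p))) with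
          (- b * (cc (S k) * (z - q * p)) / (1 - b * (q * p))) by (rewrite <- E; field; lra).
        field. repeat split; lra.
    - unfold V. simpl. rewrite Rminus_diag. unfold Rdiv. rewrite Rmult_0_r, Rmult_0_l, Rmult_0_r. auto.
    - apply lim0_dom with cc (X / (1 - q * X)); auto. intro k. unfold V. destruct k.
      + simpl. rewrite Rminus_diag. unfold Rdiv. rewrite Rmult_0_r, Rmult_0_l, Rmult_0_r, Rabs_R0.
        assert (0 <= Rabs (cc 0)) by apply Rabs_pos. assert (0 <= X / (1 - q * X)) by (apply Rdiv_le_0_compat; lra). nra.
      + assert (D1 := den_pos b k Hb). assert (D3 := q_pow_lt1 k). assert (P := q_pow_pos (S k)).
        unfold Rdiv. rewrite !Rabs_mult, Rabs_inv, Rabs_Ropp.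
        rewrite (Rabs_pos_eq (1 - q * b)) by nra. rewrite (Rabs_pos_eq b) by lra.
        rewrite (Rabs_pos_eq (1 - q ^ S k)) by lra. rewrite (Rabs_pos_eq (1 - b * q ^ S k)) by lra.
        assert (/ (1 - b * q ^ S k) <= / (1 - q * X)) by (apply Rinv_le_contravar; lra).
        assert (0 < / (1 - b * q ^ S k)) by (apply Rinv_0_lt_compat; lra).
        assert (0 <= Rabs (cc (S k))) by apply Rabs_pos.
        set (C := Rabs (cc (S k))) in *. set (I1 := / (1 - b * q ^ S k)) in *. set (I2 := / (1 - q * X)) in *.
        assert (A1 : 0 <= 1 - q * b <= 1) by nra. assert (A2 : 0 <= 1 - q ^ S k <= 1) by lra.
        assert (A3 : 0 <= (1 - q * b) * (1 - q ^ S k) <= 1) by (split; nra).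
        assert (0 <= (1 - q * b) * b * (1 - q ^ S k) <= X) by (split; nra).
        assert (0 <= C * I1 <= C * I2) by (split; nra).
        nra. }
  apply is_series_unique in T.
  rewrite Series_minus, !Series_scal_l in T. unfold FF. lra.
  - apply (ex_series_scal_l (1 - q * b) (fun k => cc k * hh b k)). apply FF_ex; auto.
  - apply (ex_series_scal_l (1 - z * b) (fun k => cc k * hh (q * b) k)). apply FF_ex; auto.
Qed.


Lemma FF_near b : 0 <= b <= X -> Rabs (FF b - GG 1) <= b * (/ (1 - q * X) * Series (fun k => Rabs (cc k))).
Proof.
  intro Hb.
  assert (E1 : FF b - GG 1 = Series (fun k => cc k * hh b k - cc k * 1 ^ k)).
  { rewrite Series_minus. unfold FF, GG; auto. apply FF_ex; auto. apply GG_ex; lra. }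
  rewrite E1. rewrite <- Rmult_assoc, <- Series_scal_l.
  apply series_abs_bound. apply (ex_series_scal_l (b * / (1 - q * X)) (fun k => Rabs (cc k))); auto.
  assert (0 < / (1 - q * X)) by (apply Rinv_0_lt_compat; lra).
  intro k. destruct k. simpl. rewrite Rminus_diag, Rabs_R0. assert (0 <= Rabs (cc 0)) by apply Rabs_pos.
  assert (0 <= b * / (1 - q * X)) by nra. nra.
  assert (D1 := den_pos b k Hb). assert (D3 := q_pow_lt1 k). assert (P := q_pow_pos (S k)).
  unfold hh. rewrite pow1.
  replace (cc (S k) * ((1 - b) / (1 - b * q ^ S k)) - cc (S k) * 1) with
    (cc (S k) * (- b * (1 - q ^ S k)) * / (1 - b * q ^ S k)) by (field; lra).
  rewrite !Rabs_mult, Rabs_inv, Rabs_Ropp, (Rabs_pos_eq b) by lra.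
  rewrite (Rabs_pos_eq (1 - q ^ S k)) by lra. rewrite (Rabs_pos_eq (1 - b * q ^ S k)) by lra.
  assert (/ (1 - b * q ^ S k) <= / (1 - q * X)) by (apply Rinv_le_contravar; lra).
  assert (0 < / (1 - b * q ^ S k)) by (apply Rinv_0_lt_compat; lra).
  assert (0 <= Rabs (cc (S k))) by apply Rabs_pos.
  set (C := Rabs (cc (S k))) in *. set (I1 := / (1 - b * q ^ S k)) in *. set (I2 := / (1 - q * X)) in *.
  assert (0 <= b * (1 - q ^ S k) <= b) by (split; nra).
  assert (0 <= C * I1 <= C * I2) by (split; nra).
  nra.
Qed.

Lemma FF_iter N : prod_lt (fun i => 1 + (- (q * X)) * q ^ i) N * FF X
   = prod_lt (fun i => 1 + (- (z * X)) * q ^ i) N * FF (q ^ N * X).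
Proof.
  induction N. simpl. rewrite !Rmult_1_l. reflexivity.
  cbn [prod_lt].
  assert (Hb : 0 <= q ^ N * X <= X).
  { assert (H1 := q_pow_pos N). assert (H2 := q_pow_le1 N). split; nra. }
  assert (H := FF_fun (q ^ N * X) Hb).
  replace (q ^ S N * X) with (q * (q ^ N * X)) by (simpl; ring).
  transitivity ((1 + - (q * X) * q ^ N) * (prod_lt (fun i : nat => 1 + - (q * X) * q ^ i) N * FF X)). ring.
  rewrite IHN.
  transitivity (prod_lt (fun i : nat => 1 + - (z * X) * q ^ i) N * ((1 - q * (q ^ N * X)) * FF (q ^ N * X))). ring.
  rewrite H. ring.
Qed.

Lemma FF_value : FF X = qpoch_inf q 1 (- (z * X)) * qpoch_inf q 1 (- q) /
    (qpoch_inf q 1 (- (q * X)) * qpoch_inf q 1 (- z)).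
Proof.
  assert (Hz : 0 < qpoch_inf q 1 (- z)) by (apply qpoch_pos; lra).
  assert (Hx : 0 < qpoch_inf q 1 (- (q * X))) by (apply qpoch_pos; nra).
  assert (L1 := is_lim_seq_scal_r _ (FF X) _ (qpoch_lim q hq0 hq1 (- (q * X)))).
  assert (L2 : is_lim_seq (fun N => FF (q ^ N * X)) (GG 1)).
  { apply lim_geom_err with (K := X * (/ (1 - q * X) * Series (fun k => Rabs (cc k)))) (rho := q). lra.
    intro N. replace (X * (/ (1 - q * X) * Series (fun k => Rabs (cc k))) * q ^ N) with
      ((q ^ N * X) * (/ (1 - q * X) * Series (fun k => Rabs (cc k)))) by ring. apply FF_near.
    assert (H1 := q_pow_pos N). assert (H2 := q_pow_le1 N). split; nra. }
  assert (L3 := is_lim_seq_mult' _ _ _ _ (qpoch_lim q hq0 hq1 (- (z * X))) L2).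
  simpl in L1.
  assert (E := lim_unique_R _ _ _ L1 (is_lim_seq_ext _ _ _ (fun N => eq_sym (FF_iter N)) L3)).
  rewrite GG1_value in E.
  apply Rmult_eq_reg_r with (qpoch_inf q 1 (- (q * X))). 2: lra.
  rewrite Rmult_comm, E. field. lra.
Qed.

End Gauss.

Section Trunc.
Variable q : R.
Hypothesis hq0 : 0 < q.
Hypothesis hq1 : q < 1.

Definition uu (k : nat) : R := (1 - q) / (1 - q ^ k).
Definition vv (k : nat) : R := q ^ k * uu k.
Definition EE (n k : nat) : R := mzv_trunc q (repeat 1%nat n) k.

Lemma qnum_INR k : qnum q (INR k) = (1 - q ^ k) / (1 - q).
Proof. unfold qnum. rewrite Rpower_pow by lra. auto. Qed.

Lemma mzv_term_eq s k : mzv_term q (S s) k = uu k * vv k ^ s.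
Proof.
  unfold mzv_term, vv. rewrite qnum_INR.
  replace (S s - 1)%nat with s by lia.
  rewrite Nat.mul_comm, pow_mult. unfold Rdiv at 1. rewrite <- pow_inv.
  rewrite Rinv_div. fold (uu k). simpl. rewrite Rpow_mult_distr. ring.
Qed.

Lemma mzv_term_1 k : mzv_term q 1 k = uu k.
Proof. rewrite mzv_term_eq. simpl. ring. Qed.

Lemma mzv_term_m2 m k : mzv_term q (m + 2) k = uu k * vv k ^ (m + 1).
Proof. replace (m + 2)%nat with (S (m + 1)) by lia. apply mzv_term_eq. Qed.

Lemma EE_0 k : EE 0 k = 1.
Proof. reflexivity. Qed.

Lemma EE_S1 n : EE (S n) 1 = 0.
Proof. unfold EE; simpl. rewrite sum_n_m_zero by lia. reflexivity. Qed.

Lemma EE_SS n i : EE (S n) (S (S i)) = EE (S n) (S i) + uu (S i) * EE n (S i).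
Proof.
  unfold EE. cbn [repeat mzv_trunc]. replace (S (S i) - 1)%nat with (S i) by lia.
  replace (S i - 1)%nat with i by lia.
  rewrite sum_n_Sm by lia. rewrite mzv_term_1. reflexivity.
Qed.

Lemma uu_pos k : (0 < k)%nat -> 0 < uu k.
Proof.
  intro Hk. unfold uu. destruct k. lia.
  assert (H := pow_lt_1_compat q (S k) ltac:(lra) ltac:(lia)).
  apply Rdiv_lt_0_compat; lra.
Qed.

Lemma EE_nonneg n i : 0 <= EE n (S i).
Proof.
  revert n. induction i; intro n.
  - destruct n. rewrite EE_0; lra. rewrite EE_S1; lra.
  - destruct n. rewrite EE_0; lra. rewrite EE_SS.
    assert (H := uu_pos (S i) ltac:(lia)). assert (I1 := IHi n). assert (I2 := IHi (S n)).
    nra.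
Qed.

Lemma EE_zero n i : (i < n)%nat -> EE n (S i) = 0.
Proof.
  revert n. induction i; intros n Hn.
  - destruct n. lia. apply EE_S1.
  - destruct n. lia. rewrite EE_SS. rewrite !IHi by lia. ring.
Qed.

Lemma Pol_prod (s : R) i N : (i <= N)%nat ->
  sum_n (fun n => s ^ n * EE n (S i)) N = prod_lt (fun j => 1 + s * uu (S j)) i.
Proof.
  revert N. induction i; intros N HN.
  - simpl. induction N. rewrite sum_O. simpl. rewrite EE_0. ring.
    rewrite sum_n_R_Sn, IHN by lia. rewrite EE_S1. ring.
  - destruct N. lia.
    rewrite sum_n_shift.
    rewrite (sum_n_ext' _ (fun n => s ^ (S n) * EE (S n) (S i) + (s * uu (S i)) * (s ^ n * EE n (S i)))).
    2: { intro n. rewrite EE_SS. simpl. ring. }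
    rewrite sum_n_Rplus, sum_n_Rscal.
    rewrite (IHi N) by lia.
    assert (E := IHi (S N) ltac:(lia)). rewrite sum_n_shift in E.
    cbn [prod_lt]. rewrite EE_0 in *. simpl pow in *. lra.
Qed.

Lemma EE_term_bound (t : R) n i : 0 < t ->
  t ^ n * EE n (S i) <= prod_lt (fun j => 1 + t * uu (S j)) i.
Proof.
  intro Ht. destruct (Compare_dec.le_lt_dec n i).
  - rewrite <- (Pol_prod t i i) by lia. apply (sum_n_term_le (fun n => t ^ n * EE n (S i))); auto.
    intro k. apply Rmult_le_pos. apply pow_le; lra. apply EE_nonneg.
  - rewrite EE_zero by lia. rewrite Rmult_0_r. apply prod_lt_nonneg. intro k.
    assert (H := uu_pos (S k) ltac:(lia)). nra.
Qed.


Definition DD (b : R) (N i : nat) : R := sum_n (fun n => (- b) ^ n * EE n (S i)) N.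
Definition QQ (b : R) (i : nat) : R := prod_lt (fun j => 1 + (- b) * uu (S j)) i.
Definition PT (t : R) (i : nat) : R := prod_lt (fun j => 1 + t * uu (S j)) i.

Lemma PT_nonneg t i : 0 <= t -> 0 <= PT t i.
Proof. intro Ht. apply prod_lt_nonneg. intro k. assert (H := uu_pos (S k) ltac:(lia)). nra. Qed.

Lemma QQ_bound b t i : Rabs b <= t -> Rabs (QQ b i) <= PT t i.
Proof.
  intro H. unfold QQ, PT. rewrite prod_lt_abs. apply prod_lt_le. intro k. split. apply Rabs_pos.
  assert (Hu := uu_pos (S k) ltac:(lia)).
  eapply Rle_trans. apply Rabs_triang. rewrite Rabs_R1, Rabs_mult, Rabs_Ropp, (Rabs_pos_eq (uu _)) by lra.
  nra.
Qed.

Lemma tail_gen b t N d i : 0 < t -> Rabs b <= t ->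
  Rabs (DD b (N + d) i - DD b N i) <= (Rabs b / t) ^ (S N) * sum_n (fun n => t ^ n * EE n (S i)) (N + d).
Proof.
  intros Ht Hb. assert (Hr : 0 <= Rabs b / t <= 1).
  { split. apply Rdiv_le_0_compat; [apply Rabs_pos | lra]. apply Rmult_le_reg_r with t; auto.
    unfold Rdiv; rewrite Rmult_assoc, Rinv_l by lra. lra. }
  induction d.
  - rewrite Nat.add_0_r, Rminus_diag, Rabs_R0. apply Rmult_le_pos. apply pow_le; lra.
    apply sum_n_nonneg. intro k. apply Rmult_le_pos. apply pow_le; lra. apply EE_nonneg.
  - replace (N + S d)%nat with (S (N + d)) by lia. unfold DD in *. rewrite !sum_n_R_Sn.
    set (M := (N + d)%nat) in *.
    replace (sum_n (fun n : nat => (- b) ^ n * EE n (S i)) M + (- b) ^ S M * EE (S M) (S i) -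
      sum_n (fun n : nat => (- b) ^ n * EE n (S i)) N) with
      ((sum_n (fun n : nat => (- b) ^ n * EE n (S i)) M - sum_n (fun n : nat => (- b) ^ n * EE n (S i)) N)
       + (- b) ^ S M * EE (S M) (S i)) by ring.
    eapply Rle_trans. apply Rabs_triang. rewrite Rmult_plus_distr_l.
    apply Rplus_le_compat. apply IHd.
    rewrite Rabs_mult, (Rabs_pos_eq (EE _ _)) by apply EE_nonneg.
    rewrite <- RPow_abs, Rabs_Ropp.
    replace (Rabs b) with ((Rabs b / t) * t) at 1 by (field; lra).
    rewrite Rpow_mult_distr.
    assert (E0 := EE_nonneg (S M) i). assert (T0 : 0 <= t ^ S M) by (apply pow_le; lra).
    assert ((Rabs b / t) ^ S M <= (Rabs b / t) ^ S N).
    { unfold M. replace (S (N + d)) with (S N + d)%nat by lia. rewrite pow_add.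
      assert (0 <= (Rabs b / t) ^ S N) by (apply pow_le; lra).
      assert ((Rabs b / t) ^ d <= 1) by (apply pow_le1; lra). nra. }
    assert (0 <= (Rabs b / t) ^ S M) by (apply pow_le; lra).
    assert (0 <= t ^ S M * EE (S M) (S i)) by nra. nra.
Qed.

Lemma tail_bound b t N i : 0 < t -> Rabs b <= t ->
  Rabs (QQ b i - DD b N i) <= (Rabs b / t) ^ (S N) * PT t i.
Proof.
  intros Ht Hb. assert (Hr : 0 <= Rabs b / t).
  { apply Rdiv_le_0_compat; [apply Rabs_pos | lra]. }
  destruct (Compare_dec.le_lt_dec i N).
  - unfold QQ, DD. rewrite Pol_prod by auto. rewrite Rminus_diag, Rabs_R0.
    apply Rmult_le_pos. apply pow_le; lra. apply PT_nonneg; lra.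
  - assert (E1 : QQ b i = DD b (N + (i - N)) i). { replace (N + (i - N))%nat with i by lia. unfold QQ, DD. rewrite Pol_prod; auto. }
    rewrite E1. eapply Rle_trans. apply (tail_gen b t); auto.
    replace (N + (i - N))%nat with i by lia. unfold PT. rewrite Pol_prod by lia. lra.
Qed.


Definition ee (t : R) (i : nat) : R := uu (S i) * vv (S i) * PT t i.

Lemma key_ineq t p : 0 <= t -> t * q < 1 -> 0 < p < 1 ->
  q * (1 - p) * (1 - p + t * (1 - q)) <= (1 - (1 - t * q) * (1 - q)) * (1 - q * p) ^ 2.
Proof.
  intros Ht Htq Hp. set (d := (1 - t * q) * (1 - q)).
  assert (E : q * (1 - p + t * (1 - q)) = (1 - q * p) - d) by (unfold d; ring).
  assert (H0 : 0 <= (1 - q * p) - d). { unfold d. replace (1 - q * p - (1 - t * q) * (1 - q)) with (q * (1 - p) + t * (q * (1 - q))) by ring.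
    assert (0 <= q * (1 - p)) by nra. assert (0 <= q * (1 - q)) by nra. assert (0 <= t * (q * (1 - q))) by nra. lra. }
  assert (Hd : 0 <= d) by (unfold d; nra).
  assert (H1 : 1 - p <= 1 - q * p) by nra.
  replace (q * (1 - p) * (1 - p + t * (1 - q))) with ((1 - p) * ((1 - q * p) - d)) by (rewrite <- E; ring).
  assert ((1 - p) * ((1 - q * p) - d) <= (1 - q * p) * ((1 - q * p) - d)) by nra.
  assert (0 < 1 - q * p) by nra.
  assert (Eq : (1 - d) * (1 - q * p) ^ 2 - (1 - q * p) * ((1 - q * p) - d) = d * (1 - q * p) * (q * p)) by ring.
  assert (0 <= d * (1 - q * p) * (q * p)). { apply Rmult_le_pos. nra. nra. }
  lra.
Qed.

Lemma ee_ratio t i : 0 <= t -> t * q < 1 -> ee t (S i) <= (1 - (1 - t * q) * (1 - q)) * ee t i.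
Proof.
  intros Ht Htq. unfold ee, vv, uu, PT. cbn [prod_lt]. fold (PT t i).
  assert (HP := PT_nonneg t i Ht).
  replace (q ^ S (S i)) with (q * q ^ S i) by (simpl; ring).
  set (p := q ^ S i).
  assert (Hp : 0 < p < 1). { split. apply pow_lt; lra. apply (pow_lt_1_compat q (S i)); lia || lra. }
  assert (K := key_ineq t p Ht Htq Hp).
  set (KK := (1 - q) ^ 2 * p / ((1 - q * p) ^ 2 * (1 - p) ^ 2)).
  assert (HK : 0 < KK). { unfold KK. apply Rdiv_lt_0_compat. apply Rmult_lt_0_compat. apply pow_lt; lra. lra.
    apply Rmult_lt_0_compat; apply pow_lt; nra. }
  change (uu (S i)) with ((1 - q) / (1 - p)).
  replace ((1 - q) / (1 - q * p) * (q * p * ((1 - q) / (1 - q * p))) * (PT t i * (1 + t * ((1 - q) / (1 - p)))))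
    with (PT t i * (KK * (q * (1 - p) * (1 - p + t * (1 - q))))) by (unfold KK; field; split; nra).
  replace ((1 - (1 - t * q) * (1 - q)) * ((1 - q) / (1 - p) * (p * ((1 - q) / (1 - p))) * PT t i))
    with (PT t i * (KK * ((1 - (1 - t * q) * (1 - q)) * (1 - q * p) ^ 2))) by (unfold KK; field; split; nra).
  apply Rmult_le_compat_l; auto. apply Rmult_le_compat_l; lra.
Qed.

Lemma ee_nonneg t i : 0 <= t -> 0 <= ee t i.
Proof.
  intro Ht. unfold ee, vv. assert (H := uu_pos (S i) ltac:(lia)). assert (H1 := PT_nonneg t i Ht).
  assert (0 < q ^ S i) by (apply pow_lt; lra).
  apply Rmult_le_pos; auto. apply Rmult_le_pos; nra.
Qed.

Lemma ee_ex t : 0 <= t -> t * q < 1 -> ex_series (ee t).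
Proof.
  intros Ht Htq. apply ex_series_ratio with (1 - (1 - t * q) * (1 - q)).
  split. nra. assert (0 < (1 - t * q) * (1 - q)) by nra. lra.
  intro; apply ee_nonneg; auto. intro; apply ee_ratio; auto.
Qed.

End Trunc.

Section Main.
Variables q a b t : R.
Hypothesis hq0 : 0 < q.
Hypothesis hq1 : q < 1.
Hypothesis ha : Rabs a * q < 1.
Hypothesis ht0 : 0 < t.
Hypothesis hbt : Rabs b < t.
Hypothesis htq : t * q < 1.

Lemma vv_bound i : 0 < vv q (S i) <= q.
Proof.
  unfold vv, uu. assert (H := pow_lt_1_compat q (S i) ltac:(lra) ltac:(lia)).
  assert (H1 : q ^ S i <= q). { simpl. assert (q ^ i <= 1) by (apply pow_le1; lra). nra. }
  assert (0 < q ^ S i) by (apply pow_lt; lra).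
  split. apply Rmult_lt_0_compat; auto. apply Rdiv_lt_0_compat; lra.
  assert ((1 - q) / (1 - q ^ S i) <= 1).
  { apply Rmult_le_reg_r with (1 - q ^ S i). lra. unfold Rdiv. rewrite Rmult_assoc, Rinv_l by lra. lra. }
  assert (0 < (1 - q) / (1 - q ^ S i)) by (apply Rdiv_lt_0_compat; lra). nra.
Qed.

Lemma uu_ge i : 1 - q <= uu q (S i).
Proof.
  unfold uu. assert (H := pow_lt_1_compat q (S i) ltac:(lra) ltac:(lia)).
  assert (0 < q ^ S i) by (apply pow_lt; lra).
  apply Rmult_le_reg_r with (1 - q ^ S i). lra. unfold Rdiv. rewrite Rmult_assoc, Rinv_l by lra. nra.
Qed.

Definition gam (m i : nat) : R := (-1) ^ m * a ^ (m + 1) * b * (uu q (S i) * vv q (S i) ^ (m + 1)).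

Lemma vpow_bound m i : 0 <= vv q (S i) ^ (m + 1) <= vv q (S i).
Proof.
  assert (H := vv_bound i). split. apply pow_le; lra.
  rewrite Nat.add_comm. simpl. assert (vv q (S i) ^ m <= 1) by (apply pow_le1; lra).
  assert (0 <= vv q (S i) ^ m) by (apply pow_le; lra). nra.
Qed.

Lemma gam_bound m i : Rabs (gam m i) <= Rabs a ^ (m + 1) * Rabs b * (uu q (S i) * vv q (S i)).
Proof.
  unfold gam. rewrite !Rabs_mult, <- !RPow_abs, Rabs_m1, pow1, Rmult_1_l.
  assert (Hu := uu_pos q hq0 hq1 (S i) ltac:(lia)). assert (Hv := vpow_bound m i).
  rewrite (Rabs_pos_eq (uu q (S i))) by lra. rewrite (Rabs_pos_eq (vv q (S i))) by (destruct (vv_bound i); lra).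
  assert (0 <= Rabs a ^ (m + 1) * Rabs b) by (apply Rmult_le_pos; [apply pow_le, Rabs_pos | apply Rabs_pos]).
  apply Rmult_le_compat_l; auto. apply Rmult_le_compat_l; lra.
Qed.

Lemma inner_ex m n : ex_series (fun i => mzv_term q (m + 2) (S i) * EE q n (S i)).
Proof.
  apply ex_series_cmp with (fun i => / t ^ n * ee q t i).
  apply (ex_series_scal_l (/ t ^ n) (ee q t)). apply (ee_ex q hq0 hq1 t); lra.
  intro i. rewrite (mzv_term_m2 q hq0).
  assert (Hu := uu_pos q hq0 hq1 (S i) ltac:(lia)). assert (Hv := vpow_bound m i).
  assert (HE := EE_nonneg q hq0 hq1 n i). assert (HB := EE_term_bound q hq0 hq1 t n i ht0).
  assert (Htn : 0 < t ^ n) by (apply pow_lt; lra).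
  rewrite Rabs_pos_eq by (apply Rmult_le_pos; [apply Rmult_le_pos|]; lra).
  unfold ee, PT.
  assert (EE q n (S i) <= / t ^ n * prod_lt (fun j => 1 + t * uu q (S j)) i).
  { apply Rmult_le_reg_l with (t ^ n). auto. rewrite <- Rmult_assoc, Rinv_r, Rmult_1_l by lra. auto. }
  assert (0 <= uu q (S i) * vv q (S i) ^ (m + 1) <= uu q (S i) * vv q (S i)) by (split; nra).
  set (P := prod_lt (fun j => 1 + t * uu q (S j)) i) in *.
  assert (0 <= / t ^ n * P) by lra.
  replace (/ t ^ n * (uu q (S i) * vv q (S i) * P)) with ((uu q (S i) * vv q (S i)) * (/ t ^ n * P)) by ring.
  apply Rmult_le_compat; try lra.
Qed.


Definition gg (m : nat) : R := Series (fun i => gam m i * QQ q b i).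

Lemma ee_ex' : ex_series (ee q t).
Proof. apply (ee_ex q hq0 hq1 t); lra. Qed.

Lemma gQ_bound m i : Rabs (gam m i * QQ q b i) <= Rabs a ^ (m + 1) * Rabs b * ee q t i.
Proof.
  rewrite Rabs_mult. unfold ee, PT.
  assert (H1 := gam_bound m i). assert (H2 := QQ_bound q hq0 hq1 b t i ltac:(lra)). unfold PT in H2.
  assert (0 <= Rabs (gam m i)) by apply Rabs_pos. assert (0 <= Rabs (QQ q b i)) by apply Rabs_pos.
  replace (Rabs a ^ (m + 1) * Rabs b * (uu q (S i) * vv q (S i) * prod_lt (fun j => 1 + t * uu q (S j)) i))
    with (Rabs a ^ (m + 1) * Rabs b * (uu q (S i) * vv q (S i)) * prod_lt (fun j => 1 + t * uu q (S j)) i) by ring.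
  apply Rmult_le_compat; auto.
Qed.

Lemma gQ_ex m : ex_series (fun i => gam m i * QQ q b i).
Proof.
  apply ex_series_cmp with (fun i => Rabs a ^ (m + 1) * Rabs b * ee q t i).
  apply (ex_series_scal_l _ (ee q t)). apply ee_ex'. apply gQ_bound.
Qed.


Lemma step1_term m n :
  (-1) ^ (m + n) * a ^ (m + 1) * b ^ (n + 1) * qzeta q ((m + 2)%nat :: repeat 1%nat n)
  = Series (fun i => gam m i * ((- b) ^ n * EE q n (S i))).
Proof.
  change (qzeta q ((m + 2)%nat :: repeat 1%nat n)) with
    (Series (fun i => mzv_term q (m + 2) (S i) * EE q n (S i))).
  rewrite <- Series_scal_l. apply Series_ext. intro i.
  rewrite (mzv_term_m2 q hq0). unfold gam.
  rewrite pow_add, (pow_add b). replace (- b) with ((-1) * b) by ring. rewrite Rpow_mult_distr, pow_1. ring.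
Qed.

Lemma gDD_ex m n : ex_series (fun i => gam m i * ((- b) ^ n * EE q n (S i))).
Proof.
  apply ex_series_ext_R with (fun i => ((-1) ^ (m + n) * a ^ (m + 1) * b ^ (n + 1)) * (mzv_term q (m + 2) (S i) * EE q n (S i))).
  - intro i. rewrite (mzv_term_m2 q hq0). unfold gam.
    rewrite pow_add, (pow_add b). replace (- b) with ((-1) * b) by ring. rewrite Rpow_mult_distr, pow_1. ring.
  - apply (ex_series_scal_l _ (fun i => mzv_term q (m + 2) (S i) * EE q n (S i))). apply inner_ex.
Qed.

Lemma step1 m : is_series (fun n => (-1) ^ (m + n) * a ^ (m + 1) * b ^ (n + 1) * qzeta q ((m + 2)%nat :: repeat 1%nat n)) (gg m).
Proof.
  apply series_lim.
  apply is_lim_seq_ext with (u := fun N => Series (fun i => gam m i * DD q b N i)).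
  { intro N. rewrite (sum_n_ext' _ _ N (step1_term m)). rewrite Series_sum_n.
    apply Series_ext. intro i. unfold DD. rewrite sum_n_Rscal. auto. apply gDD_ex. }
  set (rho := Rabs b / t).
  assert (Hr : 0 <= rho < 1).
  { unfold rho. split. apply Rdiv_le_0_compat; [apply Rabs_pos | lra].
    apply Rmult_lt_reg_r with t; auto. unfold Rdiv; rewrite Rmult_assoc, Rinv_l by lra. lra. }
  apply lim_geom_err with (K := Rabs a ^ (m + 1) * Rabs b * rho * Series (ee q t)) (rho := rho); auto.
  intro N.
  assert (DDex : ex_series (fun i => gam m i * DD q b N i)).
  { apply ex_series_ext_R with (fun i => sum_n (fun n => gam m i * ((- b) ^ n * EE q n (S i))) N).
    intro i. unfold DD. rewrite sum_n_Rscal. auto.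
    induction N. apply ex_series_ext_R with (fun i => gam m i * ((- b) ^ 0 * EE q 0 (S i))). intro; rewrite sum_O; auto.
    apply gDD_ex.
    apply ex_series_ext_R with (fun i => sum_n (fun n => gam m i * ((- b) ^ n * EE q n (S i))) N + gam m i * ((- b) ^ S N * EE q (S N) (S i))).
    intro; rewrite sum_n_R_Sn; auto.
    apply (ex_series_plus (fun i => sum_n (fun n => gam m i * ((- b) ^ n * EE q n (S i))) N)); auto. apply gDD_ex. }
  unfold gg. rewrite <- Series_minus by (auto; apply gQ_ex).
  replace (Rabs a ^ (m + 1) * Rabs b * rho * Series (ee q t) * rho ^ N) with
    (Series (fun i => (Rabs a ^ (m + 1) * Rabs b * rho ^ S N) * ee q t i)).
  2: { rewrite Series_scal_l. simpl pow. ring. }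
  apply series_abs_bound. apply (ex_series_scal_l _ (ee q t)). apply ee_ex'.
  intro i. replace (gam m i * DD q b N i - gam m i * QQ q b i) with (- (gam m i * (QQ q b i - DD q b N i))) by ring.
  rewrite Rabs_Ropp, Rabs_mult.
  assert (H1 := gam_bound m i). assert (H2 := tail_bound q hq0 hq1 b t N i ht0 ltac:(lra)).
  fold rho in H2. unfold ee, PT. unfold PT in H2.
  assert (0 <= Rabs (gam m i)) by apply Rabs_pos.
  assert (0 <= Rabs (QQ q b i - DD q b N i)) by apply Rabs_pos.
  replace (Rabs a ^ (m + 1) * Rabs b * rho ^ S N * (uu q (S i) * vv q (S i) * prod_lt (fun j => 1 + t * uu q (S j)) i))
   with ((Rabs a ^ (m + 1) * Rabs b * (uu q (S i) * vv q (S i))) * (rho ^ S N * prod_lt (fun j => 1 + t * uu q (S j)) i)) by ring.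
  apply Rmult_le_compat; auto.
Qed.


Lemma geom_alt (r : R) M : 1 + r <> 0 ->
  sum_n (fun m => (-1) ^ m * r ^ (m + 1)) M = r * (1 - (- r) ^ S M) / (1 + r).
Proof.
  intro Hr. induction M.
  - rewrite sum_O. simpl. field; auto.
  - rewrite sum_n_R_Sn, IHM. replace (- r) with ((-1) * r) by ring. rewrite !Rpow_mult_distr.
    replace (S M + 1)%nat with (S (S M)) by lia. simpl. field; auto.
Qed.

Definition TT (i : nat) : R := b * uu q (S i) * QQ q b i * (a * vv q (S i) / (1 + a * vv q (S i))).

Lemma av_bound i : Rabs (a * vv q (S i)) <= Rabs a * q.
Proof.
  rewrite Rabs_mult. assert (H := vv_bound i). rewrite (Rabs_pos_eq (vv q (S i))) by lra.
  apply Rmult_le_compat_l. apply Rabs_pos. lra.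
Qed.

Lemma den_av i : 1 - Rabs a * q <= 1 + a * vv q (S i).
Proof. assert (H := av_bound i). apply Rabs_le_between in H. lra. Qed.

Lemma TT_bound i : Rabs (TT i) <= Rabs b * Rabs a / (1 - Rabs a * q) * ee q t i.
Proof.
  unfold TT, ee, PT.
  assert (H1 := den_av i). assert (H2 := QQ_bound q hq0 hq1 b t i ltac:(lra)). unfold PT in H2.
  assert (Hu := uu_pos q hq0 hq1 (S i) ltac:(lia)). assert (Hv := vv_bound i).
  rewrite !Rabs_mult. unfold Rdiv. rewrite Rabs_mult, Rabs_inv, (Rabs_pos_eq (1 + a * vv q (S i))) by lra.
  rewrite (Rabs_pos_eq (uu q (S i))) by lra. rewrite Rabs_mult, (Rabs_pos_eq (vv q (S i))) by lra.
  assert (/ (1 + a * vv q (S i)) <= / (1 - Rabs a * q)) by (apply Rinv_le_contravar; lra).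
  assert (0 < / (1 + a * vv q (S i))) by (apply Rinv_0_lt_compat; lra).
  set (P := prod_lt (fun j => 1 + t * uu q (S j)) i) in *.
  assert (0 <= Rabs (QQ q b i)) by apply Rabs_pos.
  assert (0 <= Rabs a) by apply Rabs_pos. assert (0 <= Rabs b) by apply Rabs_pos.
  replace (Rabs b * Rabs a * / (1 - Rabs a * q) * (uu q (S i) * vv q (S i) * P)) with
    ((Rabs b * uu q (S i) * (Rabs a * vv q (S i))) * (P * / (1 - Rabs a * q))) by ring.
  replace (Rabs b * uu q (S i) * Rabs (QQ q b i) * (Rabs a * vv q (S i) * / (1 + a * vv q (S i)))) with
    ((Rabs b * uu q (S i) * (Rabs a * vv q (S i))) * (Rabs (QQ q b i) * / (1 + a * vv q (S i)))) by ring.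
  apply Rmult_le_compat_l. apply Rmult_le_pos. nra. nra.
  apply Rmult_le_compat; lra.
Qed.

Lemma TT_ex : ex_series TT.
Proof.
  apply ex_series_cmp with (fun i => Rabs b * Rabs a / (1 - Rabs a * q) * ee q t i).
  apply (ex_series_scal_l _ (ee q t)). apply ee_ex'. apply TT_bound.
Qed.

Lemma step2 : is_series gg (Series TT).
Proof.
  apply series_lim.
  apply is_lim_seq_ext with (u := fun M => Series (fun i => TT i * (1 - (- (a * vv q (S i))) ^ S M))).
  { intro M. unfold gg. rewrite Series_sum_n by (intro; apply gQ_ex).
    apply Series_ext. intro i.
    rewrite (sum_n_ext' _ (fun m => (b * uu q (S i) * QQ q b i) * ((-1) ^ m * (a * vv q (S i)) ^ (m + 1)))).
    rewrite sum_n_Rscal, geom_alt. unfold TT. field.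
    assert (H := den_av i). lra. assert (H := den_av i). lra.
    intro m. unfold gam. rewrite Rpow_mult_distr. ring. }
  set (rho := Rabs a * q).
  assert (Hr : 0 <= rho < 1). { unfold rho. split. apply Rmult_le_pos. apply Rabs_pos. lra. lra. }
  apply lim_geom_err with (K := rho * Series (fun i => Rabs (TT i))) (rho := rho); auto.
  intro M.
  assert (ATT : ex_series (fun i => Rabs (TT i))).
  { apply ex_series_cmp_abs with (fun i => Rabs b * Rabs a / (1 - Rabs a * q) * ee q t i).
    apply (ex_series_scal_l _ (ee q t)). apply ee_ex'. apply TT_bound. }
  assert (Ex1 : ex_series (fun i => TT i * (- (a * vv q (S i))) ^ S M)).
  { apply ex_series_cmp with (fun i => Rabs (TT i)); auto. intro i. rewrite Rabs_mult.
    rewrite <- RPow_abs. assert (H := av_bound i). rewrite Rabs_Ropp.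
    assert (Rabs (a * vv q (S i)) ^ S M <= 1) by (apply pow_le1; split; [apply Rabs_pos | lra]).
    assert (0 <= Rabs (TT i)) by apply Rabs_pos. nra. }
  assert (S1 : Series (fun i => TT i * (1 - (- (a * vv q (S i))) ^ S M)) =
     Series TT - Series (fun i => TT i * (- (a * vv q (S i))) ^ S M)).
  { rewrite <- Series_minus; [ | apply TT_ex | auto]. apply Series_ext. intro; ring. }
  rewrite S1.
  replace (Series TT - Series (fun i => TT i * (- (a * vv q (S i))) ^ S M) - Series TT) with
    (- Series (fun i => TT i * (- (a * vv q (S i))) ^ S M)) by ring.
  rewrite Rabs_Ropp.
  replace (rho * Series (fun i => Rabs (TT i)) * rho ^ M) with (Series (fun i => rho ^ S M * Rabs (TT i))).
  2: { rewrite Series_scal_l. simpl. ring. }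
  apply series_abs_bound. apply (ex_series_scal_l _ (fun i => Rabs (TT i))); auto.
  intro i. rewrite Rabs_mult, <- RPow_abs, Rabs_Ropp, Rmult_comm.
  apply Rmult_le_compat_r. apply Rabs_pos. apply pow_incr. split. apply Rabs_pos. apply av_bound.
Qed.

End Main.

Lemma Rpower_bounds (q x : R) : 0 < q -> q < 1 -> Rabs x < 1 -> q < Rpower q x /\ q * Rpower q x < 1.
Proof.
  intros h0 h1 hx. apply Rabs_def2 in hx.
  assert (Hl : ln q < 0). { rewrite <- ln_1. apply ln_increasing; lra. }
  unfold Rpower. split.
  - rewrite <- (exp_ln q) at 1 by lra. apply exp_increasing. nra.
  - rewrite <- (exp_ln q) at 1 by lra. rewrite <- exp_plus. rewrite <- exp_0. apply exp_increasing. nra.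
Qed.

Section Final.
Variables q X Y : R.
Hypothesis hq0 : 0 < q.
Hypothesis hq1 : q < 1.
Hypothesis hX0 : q < X.
Hypothesis hX1 : q * X < 1.
Hypothesis hY0 : q < Y.
Hypothesis hY1 : q * Y < 1.

Let a := (1 - X) / (1 - q).
Let b := (1 - Y) / (1 - q).
Let z := q * Y.

Lemma abs_qnum_bound (W : R) : q < W -> q * W < 1 -> Rabs ((1 - W) / (1 - q)) * q < 1.
Proof.
  intros H1 H2. unfold Rdiv. rewrite Rabs_mult, Rabs_inv, (Rabs_pos_eq (1 - q)) by lra.
  assert (HI : / (1 - q) * (1 - q) = 1) by (field; lra).
  assert (HI0 : 0 < / (1 - q)) by (apply Rinv_0_lt_compat; lra).
  set (I := / (1 - q)) in *.
  destruct (Rle_dec W 1).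
  - rewrite Rabs_pos_eq by lra.
    assert ((1 - W) * I <= 1) by nra. assert (0 <= (1 - W) * I) by nra. nra.
  - rewrite Rabs_left by lra.
    assert (q * (W - 1) * I < 1) by nra. nra.
Qed.


Lemma cc_rel i : cc q z (S i) = - b * vv q (S i) * QQ q b i.
Proof.
  induction i.
  - unfold cc, QQ, vv, uu, b, z. simpl. field. lra.
  - unfold cc in *. cbn [prod_lt] in *. rewrite IHi. unfold QQ. cbn [prod_lt]. fold (QQ q b i).
    unfold vv, uu, b, z.
    replace (q ^ S (S i)) with (q * q ^ S i) by (simpl; ring).
    set (p := q ^ S i).
    assert (Hp : 0 < p < 1). { split. apply pow_lt; lra. apply (pow_lt_1_compat q (S i)); lia || lra. }
    field. split; nra.
Qed.

Let t := (Rabs b + / q) / 2.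

Lemma t_facts : 0 < t /\ Rabs b < t /\ t * q < 1.
Proof.
  assert (Hb : Rabs b * q < 1) by (apply abs_qnum_bound; auto).
  assert (Hi : / q * q = 1) by (field; lra). assert (0 < / q) by (apply Rinv_0_lt_compat; lra).
  assert (Rabs b < / q). { apply Rmult_lt_reg_r with q; auto. lra. }
  assert (0 <= Rabs b) by apply Rabs_pos.
  unfold t. split. lra. split. lra. nra.
Qed.

Lemma Hc : ex_series (fun k => Rabs (cc q z k)).
Proof.
  destruct t_facts as [T1 [T2 T3]].
  apply ex_series_incr_1.
  apply ex_series_cmp with (fun i => Rabs b / (1 - q) * ee q t i).
  apply (ex_series_scal_l _ (ee q t)). apply (ee_ex q hq0 hq1 t); lra.
  intro i. rewrite Rabs_Rabsolu, cc_rel.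
  assert (Hv := vv_bound q hq0 hq1 i). assert (Hu : 1 - q <= uu q (S i)) by (apply uu_ge; lra).
  assert (HQ := QQ_bound q hq0 hq1 b t i ltac:(lra)).
  assert (HP := PT_nonneg q hq0 hq1 t i ltac:(lra)).
  unfold ee. rewrite !Rabs_mult, Rabs_Ropp, (Rabs_pos_eq (vv q (S i))) by lra.
  assert (vv q (S i) <= uu q (S i) * vv q (S i) / (1 - q)).
  { apply Rmult_le_reg_r with (1 - q). lra. unfold Rdiv. rewrite Rmult_assoc, Rinv_l by lra. nra. }
  assert (0 <= Rabs b) by apply Rabs_pos. assert (0 <= Rabs (QQ q b i)) by apply Rabs_pos.
  replace (Rabs b / (1 - q) * (uu q (S i) * vv q (S i) * PT q t i)) with
    (Rabs b * (uu q (S i) * vv q (S i) / (1 - q)) * PT q t i) by (field; lra).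
  apply Rmult_le_compat; try nra.
Qed.

Lemma TT_rel i : TT q a b i = - (cc q z (S i) * hh q X (S i)).
Proof.
  rewrite cc_rel. unfold TT, hh, vv, uu, a.
  set (p := q ^ S i).
  assert (Hp : 0 < p < 1). { split. apply pow_lt; lra. apply (pow_lt_1_compat q (S i)); lia || lra. }
  assert (p <= q). { unfold p. simpl. assert (q ^ i <= 1) by (apply pow_le1; lra). nra. }
  field. repeat split; nra.
Qed.

Lemma SeriesTT : Series (TT q a b) = 1 - FF q z X.
Proof.
  assert (Hz0 : 0 < z) by (unfold z; nra).
  assert (Hex := FF_ex q z X hq0 hq1 ltac:(lra) hX1 Hc X ltac:(lra)).
  unfold FF. rewrite (Series_incr_1 _ Hex).
  rewrite (Series_ext _ (fun i => - (cc q z (S i) * hh q X (S i)))) by apply TT_rel.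
  rewrite (Series_ext _ (fun i => (-1) * (cc q z (S i) * hh q X (S i)))) by (intro; ring).
  rewrite Series_scal_l. unfold cc, hh. simpl. ring.
Qed.

End Final.

Lemma gamma_ratio (q x y : R) : 0 < q -> q < 1 -> Rabs x < 1 -> Rabs y < 1 ->
  qGamma q (1 + x) * qGamma q (1 + y) / qGamma q (1 + x + y) =
  qpoch_inf q 1 (- (q * Rpower q y * Rpower q x)) * qpoch_inf q 1 (- q) /
    (qpoch_inf q 1 (- (q * Rpower q x)) * qpoch_inf q 1 (- (q * Rpower q y))).
Proof.
  intros h0 h1 hx hy.
  destruct (Rpower_bounds q x h0 h1 hx) as [X0 X1].
  destruct (Rpower_bounds q y h0 h1 hy) as [Y0 Y1].
  unfold qGamma.
  rewrite !Rpower_plus, Rpower_1 by lra.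
  replace (1 - (1 + x)) with (- x) by ring. replace (1 - (1 + y)) with (- y) by ring.
  replace (1 - (1 + x + y)) with (- x + - y) by ring. rewrite Rpower_plus.
  assert (P1 : 0 < qpoch_inf q 1 (- q)) by (apply qpoch_pos; nra).
  assert (P2 : 0 < qpoch_inf q 1 (- (q * Rpower q x))) by (apply qpoch_pos; nra).
  assert (P3 : 0 < qpoch_inf q 1 (- (q * Rpower q y))) by (apply qpoch_pos; nra).
  assert (E1 : 0 < Rpower (1 - q) (- x)) by (unfold Rpower; apply exp_pos).
  assert (E2 : 0 < Rpower (1 - q) (- y)) by (unfold Rpower; apply exp_pos).
  replace (q * Rpower q x * Rpower q y) with (q * Rpower q y * Rpower q x) by ring.
  set (D := qpoch_inf q 1 (- (q * Rpower q y * Rpower q x))).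
  destruct (Req_dec D 0) as [HD | HD].
  - rewrite HD. unfold Rdiv. rewrite Rinv_0, !Rmult_0_r, Rinv_0, !Rmult_0_r, !Rmult_0_l. auto.
  - field. repeat split; lra.
Qed.

Theorem theorem7p4 (q x y : R) (hq0 : 0 < q) (hq1 : q < 1)
    (hx : Rabs x < 1) (hy : Rabs y < 1) :
  exists g : nat -> R,
    (forall m : nat,
       is_series
         (fun n : nat =>
            (-1) ^ (m + n) * qnum q x ^ (m + 1) * qnum q y ^ (n + 1)
            * qzeta q ((m + 2)%nat :: repeat 1%nat n))
         (g m))
    /\ is_series g
         (1 - qGamma q (1 + x) * qGamma q (1 + y) / qGamma q (1 + x + y)).
Proof.
  destruct (Rpower_bounds q x hq0 hq1 hx) as [X0 X1].
  destruct (Rpower_bounds q y hq0 hq1 hy) as [Y0 Y1].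
  destruct (t_facts q (Rpower q y) hq0 hq1 Y0 Y1) as [T1 [T2 T3]].
  exists (gg q (qnum q x) (qnum q y)). split.
  - intro m. apply (step1 q (qnum q x) (qnum q y) _ hq0 hq1 T1 T2 T3).
  - assert (Ha : Rabs (qnum q x) * q < 1) by (apply abs_qnum_bound; auto).
    assert (H := step2 q (qnum q x) (qnum q y) _ hq0 hq1 Ha T1 T2 T3).
    unfold qnum in H.
    rewrite (SeriesTT q (Rpower q x) (Rpower q y) hq0 hq1 X0 X1 Y0 Y1) in H.
    rewrite (FF_value q (q * Rpower q y) (Rpower q x) hq0 hq1) in H; try nra.
    2: eapply Hc; eauto.
    rewrite gamma_ratio by auto. exact H.
Qed.
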